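(* Let $1<p\le s<\infty$ and $x\in\ell^{p,s}$. Then $$\zeta\!\left(\tfrac{s}{p'}+1\right)^{1/s}\|x\|_{p,s}\;\le\;\|x\|^*_{p,s}\;\le\;p'\,\|x\|_{p,s},$$ where $\zeta$ is the Riemann zeta function and $1/p+1/p'=1$. Both constants are optimal.
   Context: For a complex sequence $x=(x_n)_{n\ge1}$, $x^*$ denotes the nonincreasing rearrangement of $(|x_n|)_n$. For $1<p<\infty$, $1\le s<\infty$: $\|x\|_{p,s}=\bigl(\sum_{n=1}^\infty n^{s/p-1}(x_n^* )^s\bigr)^{1/s}$, and $\ell^{p,s}$ is the space of sequences with $\|x\|_{p,s}<\infty$. The maximal Lorentz norm is $\|x\|^*_{p,s}=\bigl(\sum_{n=1}^\infty n^{s/p-1}\bigl(\frac1n\sum_{k=1}^n x_k^*\bigr)^s\bigr)^{1/s}$. Here $1/p+1/p'=1$. *)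

(* Defs.v *)
From Stdlib Require Import Reals List.
From Coquelicot Require Import Coquelicot.
Open Scope R_scope.

(* Real power a^b for a > 0, and 0 for a <= 0 (so 0^b = 0 for b > 0). *)
Definition rpow (a b : R) : R := if Rle_dec a 0 then 0 else Rpower a b.

(* Sequences are x : nat -> C; the paper's x_{k+1} is (x k). *)

(* Set of admissible levels for the n-th rearranged value:
   t >= 0 and #{k : |x_k| > t} <= n-1. *)
Definition rearr_set (x : nat -> C) (n : nat) (t : R) : Prop :=
  0 <= t /\ exists l : list nat, (length l < n)%nat /\
    forall k : nat, t < Cmod (x k) -> In k l.

(* Nonincreasing rearrangement x^*_n (n >= 1), as an extended real. *)
Definition xstar_bar (x : nat -> C) (n : nat) : Rbar := Glb_Rbar (rearr_set x n).
Definition xstar (x : nat -> C) (n : nat) : R := real (xstar_bar x n).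

(* Terms of the series defining ||x||_{p,s}^s, indexed from m = 0 (n = m+1). *)
Definition lorentz_term (p s : R) (x : nat -> C) (m : nat) : R :=
  rpow (INR (S m)) (s / p - 1) * rpow (xstar x (S m)) s.

Definition max_lorentz_term (p s : R) (x : nat -> C) (m : nat) : R :=
  rpow (INR (S m)) (s / p - 1) *
  rpow (/ INR (S m) * sum_f_R0 (fun k => xstar x (S k)) m) s.

Definition in_lorentz (p s : R) (x : nat -> C) : Prop :=
  (forall n : nat, (1 <= n)%nat -> is_finite (xstar_bar x n)) /\
  ex_series (lorentz_term p s x).

Definition lorentz_norm (p s : R) (x : nat -> C) : R :=
  rpow (Series (lorentz_term p s x)) (/ s).

Definition max_lorentz_norm (p s : R) (x : nat -> C) : R :=
  rpow (Series (max_lorentz_term p s x)) (/ s).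

Definition zeta (a : R) : R := Series (fun m : nat => / rpow (INR (S m)) a).

Definition conj_exp (p : R) : R := p / (p - 1).

(* Main.v *)
Require Import Defs.
From Stdlib Require Import Reals List Lra Lia.
From Coquelicot Require Import Coquelicot.
Open Scope R_scope.


Lemma rpow_pos_eq a b : 0 < a -> rpow a b = Rpower a b.
Proof. intros H; unfold rpow; destruct (Rle_dec a 0); [lra|reflexivity]. Qed.
Lemma rpow_nonpos a b : a <= 0 -> rpow a b = 0.
Proof. intros H; unfold rpow; destruct (Rle_dec a 0); [reflexivity|lra]. Qed.
Lemma rpow_0 b : rpow 0 b = 0.
Proof. apply rpow_nonpos; lra. Qed.
Lemma rpow_gt0 a b : 0 < a -> 0 < rpow a b.
Proof. intros H; rewrite rpow_pos_eq; auto; unfold Rpower; apply exp_pos. Qed.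
Lemma rpow_ge0 a b : 0 <= rpow a b.
Proof. destruct (Rle_dec a 0). rewrite rpow_nonpos; lra. left; apply rpow_gt0; lra. Qed.
Lemma rpow_mult a b c : 0 <= a -> 0 <= b -> rpow (a*b) c = rpow a c * rpow b c.
Proof. intros Ha Hb. destruct Ha as [Ha|Ha]; [|subst; rewrite Rmult_0_l, !rpow_0; ring].
 destruct Hb as [Hb|Hb]; [|subst; rewrite Rmult_0_r, !rpow_0; ring].
 rewrite !rpow_pos_eq; try apply Rmult_lt_0_compat; auto.
 unfold Rpower. rewrite ln_mult by auto. rewrite <- exp_plus. f_equal; ring. Qed.
Lemma rpow_rpow a b c : 0 <= a -> rpow (rpow a b) c = rpow a (b*c).
Proof. intros [Ha|Ha]; [|subst; rewrite !rpow_0; reflexivity].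
 rewrite (rpow_pos_eq a b), rpow_pos_eq, rpow_pos_eq; auto.
 apply Rpower_mult. rewrite <- rpow_pos_eq by auto. apply rpow_gt0; auto. Qed.
Lemma rpow_1 a : 0 <= a -> rpow a 1 = a.
Proof. intros [Ha|Ha]; [|subst; apply rpow_0]. rewrite rpow_pos_eq; auto. apply Rpower_1; auto. Qed.
Lemma rpow_plus a b c : 0 < a -> rpow a (b+c) = rpow a b * rpow a c.
Proof. intros Ha; rewrite !rpow_pos_eq; auto; apply Rpower_plus. Qed.
Lemma rpow_plus0 a b c : 0 <= a -> 0 < b -> 0 < c -> rpow a (b+c) = rpow a b * rpow a c.
Proof. intros [Ha|Ha] Hb Hc; [apply rpow_plus; auto|subst; rewrite !rpow_0; ring]. Qed.
Lemma rpow_le a b c : 0 <= a <= b -> 0 <= c -> rpow a c <= rpow b c.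
Proof. intros [[Ha|Ha] Hab] Hc. rewrite !rpow_pos_eq by lra. apply Rle_Rpower_l; lra.
 subst; rewrite rpow_0; apply rpow_ge0. Qed.
Lemma rpow_lt a b c : 0 <= a < b -> 0 < c -> rpow a c < rpow b c.
Proof. intros [[Ha|Ha] Hab] Hc. rewrite !rpow_pos_eq by lra. apply Rlt_Rpower_l; lra.
 subst; rewrite rpow_0; apply rpow_gt0; lra. Qed.
Lemma rpow_opp a c : 0 < a -> rpow a (-c) = / rpow a c.
Proof. intros Ha; rewrite !rpow_pos_eq; auto; apply Rpower_Ropp. Qed.
Lemma rpow_inv a c : 0 < a -> rpow (/a) c = / rpow a c.
Proof. intros Ha. rewrite !rpow_pos_eq; auto. 2: apply Rinv_0_lt_compat; auto.
 unfold Rpower. rewrite ln_Rinv by auto. rewrite <- exp_Ropp. f_equal; ring. Qed.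
Lemma rpow_exp_le a b c : 1 <= a -> b <= c -> rpow a b <= rpow a c.
Proof. intros Ha Hbc; rewrite !rpow_pos_eq by lra; apply Rle_Rpower; auto. Qed.
Lemma rpow_exp0 a : 0 < a -> rpow a 0 = 1.
Proof. intros Ha; rewrite rpow_pos_eq; auto; apply Rpower_O; auto. Qed.
Lemma rpow_one b : rpow 1 b = 1.
Proof. rewrite rpow_pos_eq by lra. unfold Rpower. rewrite ln_1, Rmult_0_r; apply exp_0. Qed.

Lemma amgm X Y t : 0 < X -> 0 < Y -> 0 <= t <= 1 ->
  rpow X t * rpow Y (1-t) <= t * X + (1-t) * Y.
Proof.
  intros HX HY Ht. rewrite !rpow_pos_eq by auto. unfold Rpower.
  rewrite <- (exp_ln X) at 2 by auto. rewrite <- (exp_ln Y) at 2 by auto.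
  set (x := ln X); set (y := ln Y). rewrite <- exp_plus.
  set (m := t * x + (1 - t) * y).
  assert (E1 : exp x = exp m * exp (x - m)) by (rewrite <- exp_plus; f_equal; ring).
  assert (E2 : exp y = exp m * exp (y - m)) by (rewrite <- exp_plus; f_equal; ring).
  rewrite E1, E2.
  pose proof (exp_ineq1_le (x - m)). pose proof (exp_ineq1_le (y - m)).
  pose proof (exp_pos m).
  assert (t * exp (x-m) + (1-t) * exp (y-m) >= 1).
  { assert (t * exp (x - m) >= t * (1 + (x - m))) by (apply Rle_ge, Rmult_le_compat_l; lra).
    assert ((1-t) * exp (y - m) >= (1-t) * (1 + (y - m))) by (apply Rle_ge, Rmult_le_compat_l; lra).
    unfold m in *. nra. }
  assert (exp m * 1 <= exp m * (t * exp (x-m) + (1-t) * exp (y-m))) by (apply Rmult_le_compat_l; lra).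
  replace (t * (exp m * exp (x - m)) + (1 - t) * (exp m * exp (y - m))) with
    (exp m * (t * exp (x-m) + (1-t) * exp (y-m))) by ring. lra.
Qed.

Lemma bern_ge1 y g : 0 <= y -> 1 <= g -> 1 + g * (y - 1) <= rpow y g.
Proof.
  intros [Hy|Hy] Hg.
  - pose proof (amgm (rpow y g) 1 (/g) ltac:(apply rpow_gt0; auto) ltac:(lra)
      ltac:(split; [left; apply Rinv_0_lt_compat; lra| rewrite <- Rinv_1; apply Rinv_le_contravar; lra])).
    rewrite rpow_one, Rmult_1_r, rpow_rpow in H by lra.
    replace (g * / g) with 1 in H by (field; lra). rewrite rpow_1 in H by lra.
    assert (0 < /g) by (apply Rinv_0_lt_compat; lra).
    assert (g * y <= g * (/ g * rpow y g + (1 - / g) * 1)) by (apply Rmult_le_compat_l; lra).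
    replace (g * (/ g * rpow y g + (1 - / g) * 1)) with (rpow y g + g - 1) in H1 by (field; lra).
    lra.
  - subst. rewrite rpow_0. lra.
Qed.


Lemma bern_le1 y t : 0 <= y -> 0 <= t <= 1 -> rpow y t <= 1 + t * (y - 1).
Proof.
  intros [Hy|Hy] Ht.
  - destruct (Req_dec t 1). subst. rewrite rpow_1; lra.
    pose proof (amgm y 1 t Hy ltac:(lra) Ht). rewrite rpow_one in H0. lra.
  - subst. rewrite rpow_0. nra.
Qed.

Lemma bern_neg y g : 0 < y -> g <= 0 -> 1 + g * (y - 1) <= rpow y g.
Proof.
  intros Hy Hg.
  set (t := / (1 - g)).
  assert (Ht0 : 0 < t) by (apply Rinv_0_lt_compat; lra).
  assert (Ht1 : t <= 1) by (unfold t; rewrite <- Rinv_1; apply Rinv_le_contravar; lra).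
  pose proof (amgm (rpow y g) y t ltac:(apply rpow_gt0; auto) Hy ltac:(lra)).
  rewrite rpow_rpow in H by lra. rewrite <- rpow_plus in H by auto.
  replace (g * t + (1 - t)) with 0 in H by (unfold t; field; lra).
  rewrite rpow_exp0 in H by auto.
  assert ((1-g) * 1 <= (1-g) * (t * rpow y g + (1 - t) * y)) by (apply Rmult_le_compat_l; lra).
  replace ((1-g) * (t * rpow y g + (1 - t) * y)) with (rpow y g - g * y) in H0 by (unfold t; field; lra).
  lra.
Qed.

Lemma tangent u0 u s : 0 < u0 -> 0 <= u -> 1 <= s ->
  rpow u0 s + s * rpow u0 (s-1) * (u - u0) <= rpow u s.
Proof.
  intros H0 Hu Hs.
  pose proof (bern_ge1 (u / u0) s ltac:(apply Rdiv_le_0_compat; lra) Hs).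
  unfold Rdiv in H. rewrite rpow_mult in H by (try lra; left; apply Rinv_0_lt_compat; lra).
  rewrite rpow_inv in H by auto.
  assert (E : rpow u0 s = rpow u0 (s-1) * u0).
  { replace s with ((s-1)+1) at 1 by ring. rewrite rpow_plus by auto. rewrite rpow_1; lra. }
  pose proof (rpow_gt0 u0 s H0).
  pose proof (rpow_gt0 u0 (s-1) H0).
  assert (rpow u0 s * (1 + s * (u * / u0 - 1)) <= rpow u0 s * (rpow u s * / rpow u0 s))
   by (apply Rmult_le_compat_l; lra).
  replace (rpow u0 s * (rpow u s * / rpow u0 s)) with (rpow u s) in H3 by (field; lra).
  rewrite E in H3 |- *.
  replace (rpow u0 (s - 1) * u0 * (1 + s * (u * / u0 - 1))) with
    (rpow u0 (s - 1) * u0 + s * rpow u0 (s - 1) * (u - u0)) in H3 by (field; lra).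
  lra.
Qed.

Lemma rpow_succ A s : 0 <= A -> 1 < s -> rpow A s = rpow A (s-1) * A.
Proof.
  intros [HA|HA] Hs. replace s with ((s-1)+1) at 1 by ring. rewrite rpow_plus by auto. rewrite rpow_1; lra.
  subst. rewrite !rpow_0; ring.
Qed.

Lemma hardy_core q A B s c :
  0 < q -> 0 < A -> 0 <= B -> 1 < s -> 0 <= c < s - 1 ->
  let K := s / (s - 1 - c) in let n := q + 1 in
  rpow n c * rpow A s - K * (rpow n c * rpow A (s-1) * (n*A - q*B))
  <= K/s*(rpow q (c+1) * rpow B s) - K/s*(rpow n (c+1) * rpow A s).
Proof.
  intros Hq HA HB Hs Hc K n.
  assert (Hn : 0 < n) by (unfold n; lra).
  set (th := c / (s-1)).
  assert (Hth : 0 <= th < 1).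
  { unfold th; split. apply Rdiv_le_0_compat; lra. apply Rmult_lt_reg_r with (s-1). lra.
    unfold Rdiv; rewrite Rmult_assoc, Rinv_l by lra; lra. }
  set (u0 := rpow (n/q) th).
  assert (Hnq : 0 < n / q) by (apply Rdiv_lt_0_compat; lra).
  assert (Hu0 : 0 < u0) by (apply rpow_gt0; auto).
  assert (Hqu : q * u0 <= q + th).
  { pose proof (bern_le1 (n/q) th ltac:(lra) ltac:(lra)). fold u0 in H.
    assert (q * u0 <= q * (1 + th * (n / q - 1))) by (apply Rmult_le_compat_l; lra).
    replace (q * (1 + th * (n / q - 1))) with (q + th) in H0 by (unfold n; field; lra). lra. }
  assert (Eu : rpow u0 (s-1) = rpow n c / rpow q c).
  { unfold u0. rewrite rpow_rpow by lra. replace (th * (s-1)) with c by (unfold th; field; lra).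
    unfold Rdiv. rewrite rpow_mult by (try lra; left; apply Rinv_0_lt_compat; lra).
    rewrite rpow_inv by auto. reflexivity. }
  set (B0 := A * u0).
  assert (HB0 : 0 < B0) by (unfold B0; nra).
  pose proof (tangent B0 B s HB0 HB ltac:(lra)) as Ht.
  assert (EB0 : rpow B0 (s-1) = rpow A (s-1) * (rpow n c / rpow q c)).
  { unfold B0; rewrite rpow_mult by lra. rewrite Eu; reflexivity. }
  rewrite (rpow_succ B0 s) in Ht by lra.
  rewrite EB0 in Ht.
  assert (Eq1 : rpow q (c+1) = rpow q c * q) by (rewrite rpow_plus, rpow_1; lra).
  assert (En1 : rpow n (c+1) = rpow n c * n) by (rewrite rpow_plus, rpow_1; lra).
  rewrite Eq1, En1, (rpow_succ A s) by lra.
  pose proof (rpow_gt0 q c Hq). pose proof (rpow_gt0 n c Hn). pose proof (rpow_gt0 A (s-1) HA).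
  set (P := rpow n c * rpow A (s-1)).
  assert (HP : 0 < P) by (unfold P; nra).
  set (W := K * (s-1) / s).
  assert (EW : W * (1 - th) = 1) by (unfold W, K, th; field; lra).
  assert (HW : W * (n - q * u0) >= 1).
  { assert (0 < W). { unfold W, K. apply Rdiv_lt_0_compat; [|lra]. apply Rmult_lt_0_compat; [|lra].
      apply Rdiv_lt_0_compat; lra. }
    assert (W * (n - q*u0) >= W * (1 - th)) by (apply Rle_ge, Rmult_le_compat_l; unfold n; lra). lra. }
  assert (HK : 0 < K / s).
  { unfold K. apply Rdiv_lt_0_compat; [apply Rdiv_lt_0_compat|]; lra. }
  assert (Hq' : 0 < rpow q c * q) by nra.
  assert (T2 : K / s * (rpow q c * q * (rpow A (s - 1) * (rpow n c / rpow q c) * B0 +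
      s * (rpow A (s - 1) * (rpow n c / rpow q c)) * (B - B0)))
      <= K / s * (rpow q c * q * rpow B s)).
  { apply Rmult_le_compat_l; [lra|]. apply Rmult_le_compat_l; lra. }
  replace (K / s * (rpow q c * q * (rpow A (s - 1) * (rpow n c / rpow q c) * B0 +
      s * (rpow A (s - 1) * (rpow n c / rpow q c)) * (B - B0))))
   with (K / s * (q * P * B0 + s * q * P * (B - B0))) in T2 by (unfold P; field; lra).
  assert (Efin : K / s * (q * P * B0 + s * q * P * (B - B0)) - K / s * (P * n * A)
     - (P * A - K * (P * (n * A - q * B))) = P * A * (W * (n - q * u0) - 1)).
  { unfold W, B0. field; lra. }
  assert (0 <= P * A * (W * (n - q * u0) - 1)).
  { apply Rmult_le_pos; [nra|lra]. }
  replace (rpow n c * (rpow A (s - 1) * A)) with (P * A) by (unfold P; ring).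
  replace (rpow n c * rpow A (s - 1) * (n * A - q * B)) with (P * (n * A - q * B)) by (unfold P; ring).
  replace (rpow n c * n * (rpow A (s - 1) * A)) with (P * n * A) by (unfold P; ring).
  lra.
Qed.


Definition LT (p s : R) (a : nat -> R) (m : nat) : R :=
  rpow (INR (S m)) (s / p - 1) * rpow (a m) s.
Definition MT (p s : R) (a : nat -> R) (m : nat) : R :=
  rpow (INR (S m)) (s / p - 1) * rpow (/ INR (S m) * sum_f_R0 a m) s.

Lemma young A a K s : 0 <= A -> 0 <= a -> 0 < K -> 1 < s ->
  rpow A (s-1) * a <= (s-1)/(s*K) * rpow A s + rpow K (s-1) / s * rpow a s.
Proof.
  intros HA Ha HK Hs.
  assert (H1 : 0 <= (s-1)/(s*K) * rpow A s).
  { apply Rmult_le_pos. apply Rdiv_le_0_compat; nra. apply rpow_ge0. }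
  assert (H2 : 0 <= rpow K (s-1) / s * rpow a s).
  { apply Rmult_le_pos. apply Rdiv_le_0_compat; [apply rpow_ge0|lra]. apply rpow_ge0. }
  destruct HA as [HA|HA]; [|subst; rewrite rpow_0; lra].
  destruct Ha as [Ha|Ha]; [|subst; lra].
  set (t := (s-1)/s).
  assert (Ht : 0 <= t <= 1) by (unfold t; split; [apply Rdiv_le_0_compat|apply Rmult_le_reg_r with s; [lra|unfold Rdiv; rewrite Rmult_assoc, Rinv_l]]; lra).
  assert (HX : 0 < rpow A s / K) by (apply Rdiv_lt_0_compat; [apply rpow_gt0|]; lra).
  assert (HY : 0 < rpow K (s-1) * rpow a s) by (apply Rmult_lt_0_compat; apply rpow_gt0; lra).
  pose proof (amgm _ _ t HX HY Ht).
  assert (E : rpow (rpow A s / K) t * rpow (rpow K (s - 1) * rpow a s) (1 - t) = rpow A (s-1) * a).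
  { assert (E1 : rpow (rpow A s / K) t = rpow A (s-1) * / rpow K t).
    { unfold Rdiv. rewrite rpow_mult; [|left; apply rpow_gt0; lra|left; apply Rinv_0_lt_compat; lra].
      rewrite rpow_rpow by lra. rewrite rpow_inv by lra.
      replace (s * t) with (s - 1) by (unfold t; field; lra). reflexivity. }
    assert (E2 : rpow (rpow K (s - 1) * rpow a s) (1 - t) = rpow K t * a).
    { rewrite rpow_mult; [|left; apply rpow_gt0; lra|left; apply rpow_gt0; lra].
      rewrite !rpow_rpow by lra.
      replace (s * (1-t)) with 1 by (unfold t; field; lra).
      replace ((s-1) * (1-t)) with t by (unfold t; field; lra).
      rewrite rpow_1 by lra. reflexivity. }
    rewrite E1, E2. field. apply Rgt_not_eq, rpow_gt0; lra. }
  rewrite E in H.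
  replace ((s - 1) / (s * K) * rpow A s + rpow K (s - 1) / s * rpow a s) with
    (t * (rpow A s / K) + (1 - t) * (rpow K (s - 1) * rpow a s)) by (unfold t; field; lra).
  lra.
Qed.

Lemma INR_S_pos m : 0 < INR (S m).
Proof. apply lt_0_INR; lia. Qed.

Lemma hardy_partial p s a : 1 < p -> p <= s -> (forall k, 0 <= a k) ->
  forall N, sum_f_R0 (MT p s a) N <= rpow (conj_exp p) s * sum_f_R0 (LT p s a) N.
Proof.
  intros Hp Hps Ha N.
  set (c := s/p - 1).
  assert (Hs : 1 < s) by lra.
  assert (Hsp1 : s / p >= 1) by (apply Rle_ge; apply Rmult_le_reg_r with p; [lra|]; unfold Rdiv; rewrite Rmult_assoc, Rinv_l; lra).
  assert (Hsp2 : s / p < s) by (apply Rmult_lt_reg_r with p; [lra|]; unfold Rdiv; rewrite Rmult_assoc, Rinv_l; nra).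
  assert (Hc : 0 <= c < s - 1) by (unfold c; lra).
  set (K := conj_exp p).
  assert (EK : K = s / (s - 1 - c)).
  { unfold K, conj_exp. replace (s - 1 - c) with (s - s/p) by (unfold c; ring).
    replace (s - s/p) with (s * (p-1) / p) by (field; lra). field. repeat split; lra. }
  assert (HK : 0 < K) by (unfold K, conj_exp; apply Rdiv_lt_0_compat; lra).
  assert (HKs : K * (s-1) / s >= 1).
  { rewrite EK. replace (s / (s - 1 - c) * (s - 1) / s) with ((s-1)/(s-1-c)) by (field; lra).
    apply Rle_ge. apply Rmult_le_reg_r with (s-1-c); [lra|]. unfold Rdiv; rewrite Rmult_assoc, Rinv_l; lra. }
  set (A := fun m => / INR (S m) * sum_f_R0 a m).
  set (Z := fun m => rpow (INR (S m)) c * rpow (A m) (s-1) * a m).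
  set (D := fun m => K/s * (rpow (INR (S m)) (c+1) * rpow (A m) s)).
  assert (HD : forall m, 0 <= D m).
  { intro m; unfold D. apply Rmult_le_pos. apply Rdiv_le_0_compat; lra.
    apply Rmult_le_pos; apply rpow_ge0. }
  assert (HA : forall m, 0 <= A m).
  { intro m; unfold A. apply Rmult_le_pos. left; apply Rinv_0_lt_compat, INR_S_pos. apply cond_pos_sum; auto. }
  assert (C1 : forall N, sum_f_R0 (fun m => MT p s a m - K * Z m) N <= - D N).
  { induction N0.
    - simpl. unfold MT, Z, D, A. fold c. simpl sum_f_R0. replace (INR 1) with 1 by reflexivity.
      rewrite !rpow_one, Rinv_1, Rmult_1_l, !Rmult_1_l.
      rewrite (rpow_succ (a 0%nat) s) by auto.
      pose proof (rpow_ge0 (a 0%nat) (s-1)).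
      assert (0 <= rpow (a 0%nat) (s-1) * a 0%nat) by (apply Rmult_le_pos; auto).
      assert (rpow (a 0%nat) (s - 1) * a 0%nat * (K * (s-1)/s - 1) >= 0) by (apply Rle_ge, Rmult_le_pos; lra).
      assert (E0 : - (K / s * (rpow (a 0%nat) (s - 1) * a 0%nat)) - (rpow (a 0%nat) (s - 1) * a 0%nat - K * (rpow (a 0%nat) (s - 1) * a 0%nat)) = rpow (a 0%nat) (s - 1) * a 0%nat * (K * (s-1)/s - 1)) by (field; lra).
      lra.
    - rewrite tech5.
      assert (Step : MT p s a (S N0) - K * Z (S N0) <= D N0 - D (S N0)).
      { set (q := INR (S N0)).
        assert (Hq : 0 < q) by apply INR_S_pos.
        assert (En : INR (S (S N0)) = q + 1) by (unfold q; apply S_INR).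
        assert (ESS : sum_f_R0 a (S N0) = sum_f_R0 a N0 + a (S N0)) by apply tech5.
        pose proof (cond_pos_sum a (S N0) Ha) as HSS.
        destruct HSS as [HSS|HSS].
        - assert (HA1 : 0 < A (S N0)).
          { unfold A. apply Rmult_lt_0_compat; auto. apply Rinv_0_lt_compat, INR_S_pos. }
          pose proof (hardy_core q (A (S N0)) (A N0) s c Hq HA1 (HA N0) Hs Hc) as HC.
          simpl in HC. rewrite <- EK in HC.
          unfold MT, Z, D. fold c. fold (A (S N0)). fold q. rewrite En.
          replace (a (S N0)) with ((q+1) * A (S N0) - q * A N0).
          2:{ unfold A. rewrite En. fold q. rewrite ESS. field. lra. }
          lra.
        - unfold MT, Z, D. fold c. fold (A (S N0)).
          assert (A (S N0) = 0) by (unfold A; rewrite <- HSS; ring).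
          rewrite H. rewrite rpow_0. rewrite rpow_0. specialize (HD N0). unfold D in HD. lra. }
      lra. }
  assert (C2 : forall m, Z m <= (s-1)/(s*K) * MT p s a m + rpow K (s-1) / s * LT p s a m).
  { intro m. unfold Z, MT, LT. fold c. fold (A m).
    pose proof (young (A m) (a m) K s (HA m) (Ha m) HK Hs).
    pose proof (rpow_ge0 (INR (S m)) c).
    assert (rpow (INR (S m)) c * (rpow (A m) (s - 1) * a m) <=
      rpow (INR (S m)) c * ((s - 1) / (s * K) * rpow (A m) s + rpow K (s - 1) / s * rpow (a m) s))
      by (apply Rmult_le_compat_l; auto).
    lra. }
  specialize (C1 N). rewrite minus_sum in C1.
  replace (sum_f_R0 (fun m => K * Z m) N) with (K * sum_f_R0 Z N) in C1 by (rewrite scal_sum; apply sum_eq; intros; ring).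
  assert (S2 : sum_f_R0 Z N <= (s-1)/(s*K) * sum_f_R0 (MT p s a) N + rpow K (s-1) / s * sum_f_R0 (LT p s a) N).
  { rewrite !scal_sum. rewrite <- plus_sum. apply sum_Rle. intros m _. specialize (C2 m). lra. }
  specialize (HD N).
  assert (K * sum_f_R0 Z N <= K * ((s-1)/(s*K) * sum_f_R0 (MT p s a) N + rpow K (s-1) / s * sum_f_R0 (LT p s a) N))
    by (apply Rmult_le_compat_l; lra).
  rewrite (rpow_succ K s) by lra.
  replace (K * ((s - 1) / (s * K) * sum_f_R0 (MT p s a) N + rpow K (s - 1) / s * sum_f_R0 (LT p s a) N))
    with ((s-1)/s * sum_f_R0 (MT p s a) N + (rpow K (s - 1) * K) * sum_f_R0 (LT p s a) N / s) in H by (field; lra).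
  assert (Hfin : sum_f_R0 (MT p s a) N / s <= (rpow K (s - 1) * K) * sum_f_R0 (LT p s a) N / s).
  { replace (sum_f_R0 (MT p s a) N / s) with (sum_f_R0 (MT p s a) N - (s-1)/s * sum_f_R0 (MT p s a) N) by (field; lra). lra. }
  apply Rmult_le_reg_r with (/s). apply Rinv_0_lt_compat; lra.
  unfold Rdiv in Hfin. rewrite Rmult_assoc. rewrite <- (Rmult_assoc _ (sum_f_R0 (LT p s a) N)). exact Hfin.
Qed.


Lemma series_Uncv a : ex_series a -> Un_cv (fun N => sum_f_R0 a N) (Series a).
Proof. intros H. apply Series_correct in H. apply is_series_Reals in H. exact H. Qed.

Lemma ser_bound a B : (forall n, 0 <= a n) -> (forall N, sum_f_R0 a N <= B) ->
  ex_series a /\ Series a <= B.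
Proof.
  intros Ha HB.
  assert (Hg : Un_growing (fun N => sum_f_R0 a N)).
  { intro n. simpl. specialize (Ha (S n)). lra. }
  destruct (growing_cv _ Hg) as [l Hl].
  { exists B. intros x [n ->]. apply HB. }
  assert (Hex : ex_series a) by (apply ex_series_Reals_1; exists l; exact Hl).
  split; auto.
  apply (Rle_cv_lim (Un := fun N => sum_f_R0 a N) (Vn := fun _ => B)); auto.
  apply series_Uncv; auto.
  intros e He. exists O. intros. unfold R_dist. rewrite Rminus_diag, Rabs_R0. lra.
Qed.

Lemma ser_partial a N : (forall n, 0 <= a n) -> ex_series a -> sum_f_R0 a N <= Series a.
Proof. intros Ha Hex. apply sum_incr; auto. apply series_Uncv; auto. Qed.

Lemma ser_ge0 a : (forall n, 0 <= a n) -> ex_series a -> 0 <= Series a.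
Proof. intros Ha Hex. pose proof (ser_partial a 0 Ha Hex). simpl in H. specialize (Ha O). lra. Qed.

Lemma ser_le_partial a b : (forall N, sum_f_R0 a N <= sum_f_R0 b N) -> ex_series a -> ex_series b ->
  Series a <= Series b.
Proof. intros H Ha Hb. apply (Rle_cv_lim H); apply series_Uncv; auto. Qed.

Lemma LT_ge0 p s a m : 0 <= LT p s a m.
Proof. unfold LT. apply Rmult_le_pos; apply rpow_ge0. Qed.
Lemma MT_ge0 p s a m : 0 <= MT p s a m.
Proof. unfold MT. apply Rmult_le_pos; apply rpow_ge0. Qed.

Lemma hardy_series p s a : 1 < p -> p <= s -> (forall k, 0 <= a k) -> ex_series (LT p s a) ->
  ex_series (MT p s a) /\ Series (MT p s a) <= rpow (conj_exp p) s * Series (LT p s a).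
Proof.
  intros Hp Hps Ha Hex.
  apply ser_bound. apply MT_ge0.
  intro N. eapply Rle_trans. apply hardy_partial; auto.
  apply Rmult_le_compat_l. apply rpow_ge0. apply ser_partial; auto. apply LT_ge0.
Qed.


Lemma xstar_ge0 x n : is_finite (xstar_bar x n) -> 0 <= xstar x n.
Proof.
  intros Hf. unfold xstar. rewrite <- Hf in *.
  destruct (Glb_Rbar_correct (rearr_set x n)) as [_ H].
  assert (Rbar_le (Finite 0) (xstar_bar x n)).
  { apply H. intros t [Ht _]. simpl. exact Ht. }
  unfold xstar_bar in *. rewrite <- Hf in H0. simpl in H0. exact H0.
Qed.

Lemma xstar_mono x n : is_finite (xstar_bar x n) -> is_finite (xstar_bar x (S n)) ->
  xstar x (S n) <= xstar x n.
Proof.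
  intros H1 H2. unfold xstar.
  assert (Rbar_le (xstar_bar x (S n)) (xstar_bar x n)).
  { apply (is_glb_Rbar_subset (rearr_set x (S n)) (rearr_set x n)).
    - intros t [Ht [l [Hl Hk]]]. split; [exact Ht|]. exists l. split; [|exact Hk]. idtac; match goal with |- ?g => idtac g end; lia.
    - apply Glb_Rbar_correct.
    - apply Glb_Rbar_correct. }
  rewrite <- H1, <- H2 in H. simpl in H. exact H.
Qed.

Lemma xstar_bar_mono_seq x n : (forall i j, (i <= j)%nat -> Cmod (x j) <= Cmod (x i)) ->
  xstar_bar x (S n) = Finite (Cmod (x n)).
Proof.
  intros Hm. unfold xstar_bar. apply is_glb_Rbar_unique. split.
  - intros t [Ht [l [Hl Hk]]]. simpl.
    destruct (Rle_dec (Cmod (x n)) t) as [H|H]; auto. exfalso.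
    assert (incl (seq 0 (S n)) l).
    { intros k Hin. apply in_seq in Hin. apply Hk. pose proof (Hm k n ltac:(lia)). lra. }
    apply NoDup_incl_length in H0; [|apply seq_NoDup]. rewrite length_seq in H0. lia.
  - intros b Hb. apply Hb. split. apply Cmod_ge_0. exists (seq 0 n). split.
    rewrite length_seq; lia.
    intros k Hk. apply in_seq. split; [lia|].
    destruct (Nat.lt_ge_cases k n) as [H|H]; [lia|]. pose proof (Hm n k H). lra.
Qed.


Fixpoint fsum (f : nat -> R) (n : nat) : R :=
  match n with O => 0 | S n' => fsum f n' + f n' end.

Lemma fsum_S f n : fsum f (S n) = sum_f_R0 f n.
Proof. induction n. simpl; ring. simpl in *. rewrite IHn. reflexivity. Qed.

Lemma fsum_add f a b : fsum f (a + b) = fsum f a + fsum (fun r => f (a + r)%nat) b.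
Proof. induction b. simpl. rewrite Nat.add_0_r; ring. rewrite Nat.add_succ_r. simpl. rewrite IHb. ring. Qed.

Lemma fsum_block f j L : fsum f (L * j) = fsum (fun i => fsum (fun r => f (i * j + r)%nat) j) L.
Proof. induction L. reflexivity. rewrite Nat.mul_succ_l, fsum_add, IHL. simpl. reflexivity. Qed.

Lemma fsum_le f g n : (forall k, (k < n)%nat -> f k <= g k) -> fsum f n <= fsum g n.
Proof. induction n; intros H; simpl. lra. assert (fsum f n <= fsum g n) by (apply IHn; intros; apply H; lia).
  specialize (H n ltac:(lia)). lra. Qed.

Lemma fsum_ge0 f n : (forall k, (k < n)%nat -> 0 <= f k) -> 0 <= fsum f n.
Proof. intros H. replace 0 with (fsum (fun _ => 0) n). apply fsum_le; auto. induction n; simpl; auto. rewrite IHn. ring. intros; apply H; lia. Qed.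

Lemma fsum_scal f c n : fsum (fun k => c * f k) n = c * fsum f n.
Proof. induction n; simpl. ring. rewrite IHn; ring. Qed.

Lemma abel d b N : (forall m, (m <= N)%nat -> 0 <= sum_f_R0 d m) -> (forall k, 0 <= b k) ->
  (forall k, b (S k) <= b k) -> 0 <= sum_f_R0 (fun k => d k * b k) N.
Proof.
  intros HD Hb Hm.
  assert (E : forall N, sum_f_R0 (fun k => d k * b k) N =
     fsum (fun m => sum_f_R0 d m * (b m - b (S m))) N + sum_f_R0 d N * b N).
  { induction N0. simpl. ring. rewrite (tech5 (fun k => d k * b k)), IHN0. cbn [fsum]. rewrite (tech5 d N0). ring. }
  rewrite E. apply Rplus_le_le_0_compat.
  apply fsum_ge0. intros k Hk. apply Rmult_le_pos. apply HD; lia. specialize (Hm k); lra.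
  apply Rmult_le_pos; auto.
Qed.

(* convexity of the power: increments increase *)
Lemma incr_conv j t s : 0 <= j <= t -> 1 < s ->
  rpow (j+1) s - rpow j s <= rpow (t+1) s - rpow t s.
Proof.
  intros [Hj Hjt] Hs.
  destruct (Rle_dec (j+1) t) as [H1|H1].
  - assert (Ht : 0 < t) by lra.
    pose proof (tangent t (t+1) s Ht ltac:(lra) ltac:(lra)).
    pose proof (tangent (j+1) j s ltac:(lra) Hj ltac:(lra)).
    pose proof (rpow_le (j+1) t (s-1) ltac:(lra) ltac:(lra)).
    nra.
  - destruct Hj as [Hj|Hj]; [|subst; destruct Hjt as [Ht|Ht]; [|subst; lra]].
    + assert (Ht : 0 < t) by lra.
      pose proof (tangent (j+1) (t+1) s ltac:(lra) ltac:(lra) ltac:(lra)).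
      pose proof (tangent t j s Ht ltac:(lra) ltac:(lra)).
      pose proof (rpow_le t (j+1) (s-1) ltac:(lra) ltac:(lra)).
      assert (s * rpow t (s-1) * (t - j) <= s * rpow (j+1) (s-1) * (t - j)).
      { apply Rmult_le_compat_r; [lra|]. apply Rmult_le_compat_l; lra. }
      nra.
    + pose proof (tangent 1 (t+1) s ltac:(lra) ltac:(lra) ltac:(lra)).
      pose proof (tangent t 0 s Ht ltac:(lra) ltac:(lra)).
      pose proof (rpow_le t 1 (s-1) ltac:(lra) ltac:(lra)).
      rewrite rpow_0 in *. rewrite rpow_one in *. replace (0+1) with 1 by ring. rewrite rpow_one.
      assert (s * rpow t (s-1) * (t - 0) <= s * 1 * (t - 0)).
      { apply Rmult_le_compat_r; [lra|]. apply Rmult_le_compat_l; lra. }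
      rewrite rpow_one in H. nra.
Qed.

Lemma incr_lemma T a j s : 0 <= a -> 0 <= j -> j * a <= T -> 1 < s ->
  (rpow (j+1) s - rpow j s) * rpow a s <= rpow (T + a) s - rpow T s.
Proof.
  intros Ha Hj HT Hs.
  destruct Ha as [Ha|Ha]; [|subst; rewrite rpow_0, Rplus_0_r; lra].
  set (t := T / a).
  assert (Ht : j <= t) by (unfold t; apply Rmult_le_reg_r with a; [lra|]; unfold Rdiv; rewrite Rmult_assoc, Rinv_l; lra).
  pose proof (incr_conv j t s ltac:(lra) Hs).
  assert (ET : T = a * t) by (unfold t; field; lra).
  assert (ETa : T + a = a * (t + 1)) by (rewrite ET; ring).
  rewrite ETa, ET. rewrite !rpow_mult by lra.
  pose proof (rpow_gt0 a s Ha). nra.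
Qed.


Definition zt (al : R) (m : nat) : R := / rpow (INR (S m)) al.
Definition chi (k n : nat) : R := if Nat.leb k n then 1 else 0.

Lemma chi_ge0 k n : 0 <= chi k n.
Proof. unfold chi; destruct (Nat.leb k n); lra. Qed.
Lemma chi_le1 k n : chi k n <= 1.
Proof. unfold chi; destruct (Nat.leb k n); lra. Qed.

Lemma zt_pos al m : 0 < zt al m.
Proof. unfold zt. apply Rinv_0_lt_compat, rpow_gt0, INR_S_pos. Qed.

Lemma sum_chi f n N : sum_f_R0 (fun k => f k * chi k n) N = sum_f_R0 f (Nat.min n N).
Proof.
  induction N.
  - simpl. unfold chi. simpl. rewrite Nat.min_0_r. simpl. ring.
  - rewrite tech5, IHN. unfold chi. destruct (Nat.leb_spec (S N) n).
    + rewrite (Nat.min_r n (S N)) by lia. rewrite (Nat.min_r n N) by lia. rewrite tech5. ring.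
    + rewrite (Nat.min_l n (S N)) by lia. rewrite (Nat.min_l n N) by lia. ring.
Qed.

Lemma telescope s j : 1 < s -> sum_f_R0 (fun k => rpow (INR (S k)) s - rpow (INR k) s) j = rpow (INR (S j)) s.
Proof.
  intros Hs. induction j.
  - simpl. rewrite rpow_0. ring.
  - rewrite tech5, IHj. ring.
Qed.

Lemma ex_series_nn a b : (forall n, 0 <= a n <= b n) -> ex_series b -> ex_series a.
Proof.
  intros H Hb. apply ex_series_Reals_1. apply (Rseries_CV_comp a b H).
  apply ex_series_Reals_0; auto.
Qed.

Lemma series_swap (F : nat -> nat -> R) N : (forall k, ex_series (F k)) ->
  ex_series (fun n => sum_f_R0 (fun k => F k n) N) /\
  Series (fun n => sum_f_R0 (fun k => F k n) N) = sum_f_R0 (fun k => Series (F k)) N.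
Proof.
  intros HF. induction N.
  - simpl. split; auto. 
  - destruct IHN as [IH1 IH2].
    assert (E : forall n, sum_f_R0 (fun k => F k n) (S N) = sum_f_R0 (fun k => F k n) N + F (S N) n)
      by (intro; apply tech5).
    split.
    + eapply ex_series_ext. intro n. symmetry. apply E.
      apply (ex_series_plus _ _ IH1 (HF (S N))).
    + rewrite (Series_ext _ _ E). rewrite Series_plus; auto. rewrite IH2, tech5. reflexivity.
Qed.

Lemma sum_mono a i j : (forall n, 0 <= a n) -> (i <= j)%nat -> sum_f_R0 a i <= sum_f_R0 a j.
Proof.
  intros Ha Hij. induction Hij. lra. rewrite tech5. specialize (Ha (S m)). lra.
Qed.

Lemma decr_mono (a : nat -> R) : (forall k, a (S k) <= a k) -> forall i j, (i <= j)%nat -> a j <= a i.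
Proof. intros H i j Hij. induction Hij. lra. specialize (H m). lra. Qed.

Lemma sum_increments a s : 1 < s -> (forall k, 0 <= a k) -> (forall k, a (S k) <= a k) ->
  forall m, sum_f_R0 (fun k => (rpow (INR (S k)) s - rpow (INR k) s) * rpow (a k) s) m <= rpow (sum_f_R0 a m) s.
Proof.
  intros Hs Ha Hd m. induction m.
  - simpl. rewrite rpow_one, rpow_0. lra.
  - rewrite tech5, (tech5 a).
    assert (Hsum : INR (S m) * a (S m) <= sum_f_R0 a m).
    { rewrite Rmult_comm, <- sum_cte. apply sum_Rle. intros k Hk. apply (decr_mono a Hd); lia. }
    pose proof (incr_lemma (sum_f_R0 a m) (a (S m)) (INR (S m)) s (Ha _) (pos_INR _) Hsum Hs).
    rewrite (S_INR (S m)). lra.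
Qed.

Lemma cv_const (l : R) : Un_cv (fun _ => l) l.
Proof. intros e He. exists O. intros. unfold R_dist. rewrite Rminus_diag, Rabs_R0. lra. Qed.

Lemma fsum_le_series f n : (forall k, 0 <= f k) -> ex_series f -> fsum f n <= Series f.
Proof.
  intros Hf Hex. destruct n. simpl. apply ser_ge0; auto.
  rewrite fsum_S. apply ser_partial; auto.
Qed.

Lemma block_term al c s m i r : 0 <= c -> al = s - c -> 0 < al -> (r < S m)%nat ->
  zt al i * rpow (INR (S r)) c <= zt al (i * S m + r) * rpow (INR (S (Nat.min (i * S m + r) m))) s.
Proof.
  intros Hc Hal Hal0 Hr.
  assert (Hpow : forall x, 0 < x -> / rpow x al * rpow x s = rpow x c).
  { intros x Hx. replace s with (c + al) by lra. rewrite rpow_plus by auto. field. apply Rgt_not_eq, rpow_gt0; auto. }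
  destruct i.
  - simpl. rewrite Nat.min_l by lia. unfold zt. replace (INR 1) with 1 by reflexivity. rewrite rpow_one, Rinv_1, Rmult_1_l.
    rewrite Hpow by apply INR_S_pos. lra.
  - rewrite Nat.min_r by lia. unfold zt.
    assert (Hle : INR (S (S i * S m + r)) <= INR (S (S i)) * INR (S m)).
    { rewrite <- mult_INR. apply le_INR. nia. }
    pose proof (INR_S_pos (S i)) as H1. pose proof (INR_S_pos m) as H2.
    pose proof (INR_S_pos (S i * S m + r)) as H3.
    assert (rpow (INR (S (S i * S m + r))) al <= rpow (INR (S (S i)) * INR (S m)) al)
      by (apply rpow_le; lra).
    rewrite rpow_mult in H by lra.
    assert (/ (rpow (INR (S (S i))) al * rpow (INR (S m)) al) <= / rpow (INR (S (S i * S m + r))) al).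
    { apply Rinv_le_contravar; auto. apply rpow_gt0; auto. }
    assert (E : / (rpow (INR (S (S i))) al * rpow (INR (S m)) al) * rpow (INR (S m)) s = / rpow (INR (S (S i))) al * rpow (INR (S m)) c).
    { rewrite <- Hpow by auto. field. split; apply Rgt_not_eq, rpow_gt0; auto. }
    assert (rpow (INR (S r)) c <= rpow (INR (S m)) c) by (apply rpow_le; [split; [apply pos_INR|apply le_INR; lia]|lra]).
    pose proof (rpow_gt0 (INR (S m)) s H2).
    pose proof (zt_pos al (S i)). unfold zt in H6.
    apply Rle_trans with (/ rpow (INR (S (S i))) al * rpow (INR (S m)) c).
    apply Rmult_le_compat_l; lra.
    rewrite <- E. apply Rmult_le_compat_r; lra.
Qed.

Lemma block_series al c s m : 0 <= c -> al = s - c -> 0 < al -> ex_series (zt al) ->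
  ex_series (fun n => zt al n * rpow (INR (S (Nat.min n m))) s) ->
  sum_f_R0 (fun r => rpow (INR (S r)) c) m * Series (zt al) <=
  Series (fun n => zt al n * rpow (INR (S (Nat.min n m))) s).
Proof.
  intros Hc Hal Hal0 Hz Hf.
  set (f := fun n => zt al n * rpow (INR (S (Nat.min n m))) s).
  set (G := sum_f_R0 (fun r => rpow (INR (S r)) c) m).
  assert (Hf0 : forall n, 0 <= f n) by (intro n; unfold f; apply Rmult_le_pos; [left; apply zt_pos|apply rpow_ge0]).
  assert (HL : forall L, G * sum_f_R0 (zt al) L <= Series f).
  { intro L. eapply Rle_trans; [|apply (fsum_le_series f (S L * S m)); auto].
    rewrite fsum_block. rewrite <- fsum_S.
    rewrite <- fsum_scal. apply fsum_le. intros i Hi.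
    unfold G. rewrite <- fsum_S. rewrite Rmult_comm, <- fsum_scal.
    apply fsum_le. intros r Hr. unfold f. apply block_term; auto. }
  apply (Rle_cv_lim (Un := fun L => G * sum_f_R0 (zt al) L) (Vn := fun _ => Series f)); auto.
  apply CV_mult. apply cv_const. apply series_Uncv; auto. apply cv_const.
Qed.


Lemma lower_main p s a : 1 < p -> p <= s -> (forall k, 0 <= a k) -> (forall k, a (S k) <= a k) ->
  ex_series (LT p s a) -> ex_series (zt (s / conj_exp p + 1)) ->
  Series (zt (s / conj_exp p + 1)) * Series (LT p s a) <= Series (MT p s a).
Proof.
  intros Hp Hps Ha Hd HexL Hz.
  set (al := s / conj_exp p + 1) in *.
  set (c := s / p - 1).
  assert (Hs : 1 < s) by lra.
  assert (Hsp1 : s / p >= 1) by (apply Rle_ge; apply Rmult_le_reg_r with p; [lra|]; unfold Rdiv; rewrite Rmult_assoc, Rinv_l; lra).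
  assert (Hc : 0 <= c) by (unfold c; lra).
  assert (Hal : al = s - c) by (unfold al, c, conj_exp; field; lra).
  assert (Hal0 : 0 < al) by (unfold al, conj_exp; assert (0 < s / (p / (p-1))) by (apply Rdiv_lt_0_compat; [|apply Rdiv_lt_0_compat]; lra); lra).
  destruct (hardy_series p s a Hp Hps Ha HexL) as [HexM _].
  set (zeta0 := Series (zt al)).
  set (S_ := fun m => sum_f_R0 a m).
  assert (HS0 : forall m, 0 <= S_ m) by (intro; apply cond_pos_sum; auto).
  assert (EMT : forall m, MT p s a m = zt al m * rpow (S_ m) s).
  { intro m. unfold MT, zt, S_. fold c. pose proof (INR_S_pos m).
    rewrite rpow_mult by first [apply HS0 | left; apply Rinv_0_lt_compat; auto].
    rewrite rpow_inv by auto. replace s with (c + al) at 1 by lra. rewrite rpow_plus by auto.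
    field. split; apply Rgt_not_eq, rpow_gt0; auto. }
  set (e := fun k => rpow (INR (S k)) s - rpow (INR k) s).
  assert (He : forall k, 0 <= e k).
  { intro k. unfold e. pose proof (rpow_le (INR k) (INR (S k)) s ltac:(split; [apply pos_INR|apply le_INR; lia]) ltac:(lra)). lra. }
  set (b := fun k => rpow (a k) s).
  assert (Hb : forall k, 0 <= b k) by (intro; apply rpow_ge0).
  assert (Hbd : forall k, b (S k) <= b k) by (intro k; unfold b; apply rpow_le; [split; auto|lra]).
  set (Tl := fun k => Series (fun n => zt al n * chi k n)).
  assert (HexT : forall k, ex_series (fun n => zt al n * chi k n)).
  { intro k. apply (ex_series_nn _ (zt al)); auto. intro n. pose proof (zt_pos al n). pose proof (chi_ge0 k n). pose proof (chi_le1 k n). split. nra. nra. }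
  assert (Bound : forall N, zeta0 * sum_f_R0 (LT p s a) N <= Series (MT p s a)).
  { intro N.
    set (Q := fun n => sum_f_R0 (fun k => e k * b k * chi k n) N).
    assert (HQ : forall n, 0 <= Q n <= rpow (S_ n) s).
    { intro n. split.
      - apply cond_pos_sum. intro k. apply Rmult_le_pos. apply Rmult_le_pos; auto. apply chi_ge0.
      - unfold Q. rewrite sum_chi. eapply Rle_trans. apply sum_increments; auto.
        apply rpow_le; [|lra]. split. apply cond_pos_sum; auto. apply sum_mono; auto. lia. }
    assert (HMQ : Series (fun n => zt al n * Q n) <= Series (MT p s a)).
    { apply Series_le; auto. intro n. rewrite EMT. pose proof (zt_pos al n). specialize (HQ n). split. nra.
      apply Rmult_le_compat_l; lra. }
    assert (EQ : forall n, zt al n * Q n = sum_f_R0 (fun k => e k * b k * (zt al n * chi k n)) N).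
    { intro n. unfold Q. rewrite scal_sum. apply sum_eq. intros; ring. }
    assert (HexF : forall k, ex_series (fun n => e k * b k * (zt al n * chi k n))).
    { intro k. eapply ex_series_ext; [|exact (ex_series_scal_l (e k * b k) _ (HexT k))]; intro n; reflexivity. }
    destruct (series_swap _ N HexF) as [_ Esw].
    rewrite (Series_ext _ _ EQ), Esw in HMQ.
    assert (Esc : forall k, Series (fun n => e k * b k * (zt al n * chi k n)) = e k * Tl k * b k).
    { intro k. rewrite Series_scal_l. unfold Tl. ring. }
    rewrite (sum_eq _ _ N (fun k _ => Esc k)) in HMQ.
    set (d := fun k => e k * Tl k - zeta0 * rpow (INR (S k)) c).
    assert (HD : forall m, (m <= N)%nat -> 0 <= sum_f_R0 d m).
    { intros m _. unfold d. rewrite minus_sum.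
      replace (sum_f_R0 (fun i => zeta0 * rpow (INR (S i)) c) m) with (zeta0 * sum_f_R0 (fun i => rpow (INR (S i)) c) m)
        by (rewrite scal_sum; apply sum_eq; intros; ring).
      assert (HexF2 : forall k, ex_series (fun n => e k * (zt al n * chi k n))).
      { intro k. eapply ex_series_ext; [|exact (ex_series_scal_l (e k) _ (HexT k))]; intro n; reflexivity. }
      destruct (series_swap _ m HexF2) as [Hex2 Esw2].
      assert (E2 : forall n, sum_f_R0 (fun k => e k * (zt al n * chi k n)) m = zt al n * rpow (INR (S (Nat.min n m))) s).
      { intro n. replace (sum_f_R0 (fun k => e k * (zt al n * chi k n)) m) with (zt al n * sum_f_R0 (fun k => e k * chi k n) m)
          by (rewrite scal_sum; apply sum_eq; intros; ring).
        rewrite sum_chi. unfold e. rewrite telescope; auto. }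
      assert (E3 : sum_f_R0 (fun k => e k * Tl k) m = Series (fun n => zt al n * rpow (INR (S (Nat.min n m))) s)).
      { rewrite <- (Series_ext _ _ E2), Esw2. apply sum_eq. intros k _. unfold Tl. rewrite Series_scal_l. reflexivity. }
      rewrite E3.
      pose proof (block_series al c s m Hc Hal Hal0 Hz (ex_series_ext _ _ E2 Hex2)).
      fold zeta0 in H. lra. }
    pose proof (abel d b N HD Hb Hbd).
    unfold d in H. 
    replace (sum_f_R0 (fun k => (e k * Tl k - zeta0 * rpow (INR (S k)) c) * b k) N) with
      (sum_f_R0 (fun k => e k * Tl k * b k) N - zeta0 * sum_f_R0 (LT p s a) N) in H.
    2:{ rewrite scal_sum, <- minus_sum. apply sum_eq. intros. unfold LT, b. fold c. ring. }
    lra. }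
  apply (Rle_cv_lim (Un := fun N => zeta0 * sum_f_R0 (LT p s a) N) (Vn := fun _ => Series (MT p s a))); auto.
  apply CV_mult. apply cv_const. apply series_Uncv; auto. apply cv_const.
Qed.


Definition e1 (k : nat) : R := if Nat.eqb k 0 then 1 else 0.

Lemma sum_e1 m : sum_f_R0 e1 m = 1.
Proof. induction m. reflexivity. rewrite tech5, IHm. unfold e1. simpl. ring. Qed.

Lemma LT_e1_series p s : 0 < s -> ex_series (LT p s e1) /\ Series (LT p s e1) = 1.
Proof.
  intros Hs.
  assert (E0 : LT p s e1 0 = 1).
  { unfold LT, e1. simpl. replace (INR 1) with 1 by reflexivity. rewrite !rpow_one. ring. }
  assert (ES : forall m, LT p s e1 (S m) = 0).
  { intro m. unfold LT, e1. simpl. rewrite rpow_0. ring. }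
  assert (Hsum : forall N, sum_f_R0 (LT p s e1) N = 1).
  { induction N. simpl. exact E0. rewrite tech5, IHN, ES. ring. }
  destruct (ser_bound (LT p s e1) 1 (LT_ge0 p s e1)) as [Hex Hle].
  { intro N. rewrite Hsum. lra. }
  split; auto.
  pose proof (ser_partial (LT p s e1) 0 (LT_ge0 p s e1) Hex). simpl in H. lra.
Qed.

Lemma MT_e1 p s m : MT p s e1 m = rpow (INR (S m)) (s/p - 1) * / rpow (INR (S m)) s.
Proof. unfold MT. rewrite sum_e1, Rmult_1_r. rewrite rpow_inv by apply INR_S_pos. reflexivity. Qed.

Lemma zeta_conv al : 1 < al -> ex_series (zt al).
Proof.
  intros Hal.
  destruct (hardy_series al al e1 Hal ltac:(lra)) as [Hex _].
  { intro k. unfold e1. destruct (Nat.eqb k 0); lra. }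
  apply LT_e1_series; lra.
  eapply ex_series_ext; [|exact Hex]. intro m. rewrite MT_e1. unfold zt.
  replace (al / al - 1) with 0 by (field; lra). rewrite rpow_exp0 by apply INR_S_pos. apply Rmult_1_l.
Qed.

Lemma MT_e1_zt p s m : 1 < p -> MT p s e1 m = zt (s / conj_exp p + 1) m.
Proof.
  intros Hp. rewrite MT_e1. unfold zt. pose proof (INR_S_pos m).
  replace s with ((s/p - 1) + (s / conj_exp p + 1)) at 2 by (unfold conj_exp; field; lra).
  rewrite rpow_plus by auto. field. split; apply Rgt_not_eq, rpow_gt0; auto.
Qed.


Lemma al_gt1 p s : 1 < p -> p <= s -> 1 < s / conj_exp p + 1.
Proof. intros. unfold conj_exp. assert (0 < s / (p / (p-1))) by (apply Rdiv_lt_0_compat; [|apply Rdiv_lt_0_compat]; lra). lra. Qed.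

Lemma part1 p s : 1 < p -> p <= s -> forall x : nat -> C, in_lorentz p s x ->
     ex_series (max_lorentz_term p s x) /\
     rpow (zeta (s / conj_exp p + 1)) (/ s) * lorentz_norm p s x
       <= max_lorentz_norm p s x /\
     max_lorentz_norm p s x <= conj_exp p * lorentz_norm p s x.
Proof.
  intros Hp Hps x [Hfin HexL].
  set (a := fun k => xstar x (S k)).
  assert (Ha : forall k, 0 <= a k) by (intro k; apply xstar_ge0, Hfin; lia).
  assert (Hd : forall k, a (S k) <= a k) by (intro k; unfold a; apply xstar_mono; apply Hfin; lia).
  change (lorentz_term p s x) with (LT p s a) in HexL.
  unfold max_lorentz_norm, lorentz_norm, zeta.
  change (max_lorentz_term p s x) with (MT p s a).
  change (lorentz_term p s x) with (LT p s a).
  destruct (hardy_series p s a Hp Hps Ha HexL) as [HexM Hup].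
  pose proof (zeta_conv _ (al_gt1 p s Hp Hps)) as Hz.
  pose proof (lower_main p s a Hp Hps Ha Hd HexL Hz) as Hlow.
  assert (Hs : 0 < s) by lra.
  assert (HiS : 0 <= / s) by (left; apply Rinv_0_lt_compat; lra).
  assert (HL0 : 0 <= Series (LT p s a)) by (apply ser_ge0; auto; apply LT_ge0).
  assert (HZ0 : 0 <= Series (zt (s / conj_exp p + 1))) by (apply ser_ge0; auto; intro; left; apply zt_pos).
  split; [exact HexM|split].
  - change (fun m : nat => / rpow (INR (S m)) (s / conj_exp p + 1)) with (zt (s / conj_exp p + 1)).
    rewrite <- rpow_mult by auto. apply rpow_le; auto. split; auto. apply Rmult_le_pos; auto.
  - assert (HK : 0 < conj_exp p) by (unfold conj_exp; apply Rdiv_lt_0_compat; lra).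
    replace (conj_exp p) with (rpow (rpow (conj_exp p) s) (/ s)) at 1.
    2:{ rewrite rpow_rpow by lra. replace (s * / s) with 1 by (field; lra). apply rpow_1; lra. }
    rewrite <- rpow_mult by (auto; apply rpow_ge0).
    apply rpow_le; auto. split; auto. apply ser_ge0; auto. apply MT_ge0.
Qed.

Lemma xe1_props p s : 1 < p -> p <= s ->
  let x := fun k => RtoC (e1 k) in
  in_lorentz p s x /\ lorentz_norm p s x = 1 /\
  max_lorentz_norm p s x = rpow (zeta (s / conj_exp p + 1)) (/ s).
Proof.
  intros Hp Hps x.
  assert (Hm : forall i j, (i <= j)%nat -> Cmod (x j) <= Cmod (x i)).
  { intros i j Hij. unfold x. rewrite !Cmod_R. unfold e1.
    destruct (Nat.eqb_spec j 0); destruct (Nat.eqb_spec i 0); try lia; rewrite ?Rabs_R1, ?Rabs_R0; lra. }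
  assert (Ea : forall k, xstar x (S k) = e1 k).
  { intro k. unfold xstar. rewrite xstar_bar_mono_seq by auto. simpl. unfold x. rewrite Cmod_R.
    unfold e1; destruct (Nat.eqb k 0); [apply Rabs_R1|apply Rabs_R0]. }
  assert (ELT : forall m, lorentz_term p s x m = LT p s e1 m).
  { intro m. unfold lorentz_term, LT. rewrite Ea. reflexivity. }
  assert (EMT : forall m, max_lorentz_term p s x m = MT p s e1 m).
  { intro m. unfold max_lorentz_term, MT. f_equal. f_equal. f_equal. apply sum_eq. intros; apply Ea. }
  destruct (LT_e1_series p s ltac:(lra)) as [Hex Hser].
  split; [split|split].
  - intros n Hn. destruct n; [lia|]. rewrite xstar_bar_mono_seq by auto. reflexivity.
  - eapply ex_series_ext; [|exact Hex]. intro m. symmetry. apply ELT.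
  - unfold lorentz_norm. rewrite (Series_ext _ _ ELT), Hser. apply rpow_one.
  - unfold max_lorentz_norm, zeta. f_equal. apply Series_ext. intro m. rewrite EMT. apply MT_e1_zt; auto.
Qed.

Lemma part2 p s : 1 < p -> p <= s ->
  forall c : R, rpow (zeta (s / conj_exp p + 1)) (/ s) < c ->
     exists x : nat -> C, in_lorentz p s x /\
       max_lorentz_norm p s x < c * lorentz_norm p s x.
Proof.
  intros Hp Hps c Hc. destruct (xe1_props p s Hp Hps) as [H1 [H2 H3]].
  eexists. split. exact H1. rewrite H2, H3. lra.
Qed.


Lemma EMT_gen p s a m : 1 < p -> (forall k, 0 <= a k) ->
  MT p s a m = zt (s / conj_exp p + 1) m * rpow (sum_f_R0 a m) s.
Proof.
  intros Hp Ha. unfold MT, zt. pose proof (INR_S_pos m).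
  assert (HS : 0 <= sum_f_R0 a m) by (apply cond_pos_sum; auto).
  rewrite rpow_mult by first [apply HS | left; apply Rinv_0_lt_compat; auto].
  rewrite rpow_inv by auto.
  set (c := s / p - 1). set (al := s / conj_exp p + 1).
  replace s with (c + al) at 1 by (unfold c, al, conj_exp; field; lra).
  rewrite rpow_plus by auto.
  field. split; apply Rgt_not_eq, rpow_gt0; auto.
Qed.

Lemma zeta_ge1 al : ex_series (zt al) -> 1 <= Series (zt al).
Proof.
  intros H. pose proof (ser_partial (zt al) 0 (fun n => Rlt_le _ _ (zt_pos al n)) H).
  simpl in H0. unfold zt in H0. replace (INR 1) with 1 in H0 by reflexivity. rewrite rpow_one, Rinv_1 in H0. exact H0.
Qed.

(* integral comparison from below for sum of k^(g-1) *)
Lemma sum_pow_lower g m : 0 < g < 1 ->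
  rpow (INR (S (S m))) g - 1 <= g * sum_f_R0 (fun k => rpow (INR (S k)) (g - 1)) m.
Proof.
  intros Hg.
  assert (Hterm : forall k, rpow (INR (S (S k))) g - rpow (INR (S k)) g <= g * rpow (INR (S k)) (g - 1)).
  { intro k. pose proof (INR_S_pos k) as H1.
    rewrite (S_INR (S k)). set (y := INR (S k)) in *.
    pose proof (bern_le1 ((y+1)/y) g ltac:(apply Rdiv_le_0_compat; lra) ltac:(lra)).
    unfold Rdiv in H. rewrite rpow_mult in H by (try lra; left; apply Rinv_0_lt_compat; lra).
    rewrite rpow_inv in H by lra.
    pose proof (rpow_gt0 y g H1).
    assert (rpow y g * (rpow (y + 1) g * / rpow y g) <= rpow y g * (1 + g * ((y + 1) * / y - 1)))
      by (apply Rmult_le_compat_l; lra).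
    replace (rpow y g * (rpow (y + 1) g * / rpow y g)) with (rpow (y+1) g) in H2 by (field; lra).
    replace (rpow y (g - 1)) with (rpow y g * / y).
    2:{ unfold Rminus. rewrite rpow_plus by lra. rewrite rpow_opp, rpow_1 by lra. reflexivity. }
    replace (rpow y g * (1 + g * ((y + 1) * / y - 1))) with (rpow y g + g * (rpow y g * / y)) in H2 by (field; lra).
    lra. }
  induction m.
  - simpl. specialize (Hterm O). replace (INR 1) with 1 in * by reflexivity. rewrite !rpow_one in *. change (INR 2) with (1+1) in *. lra.
  - rewrite tech5. specialize (Hterm (S m)). lra.
Qed.

Lemma zeta_lower_partial eta L : 0 < eta ->
  1 - rpow (INR (S (S L))) (- eta) <= eta * sum_f_R0 (zt (1 + eta)) L.
Proof.
  intros He.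
  assert (Hterm : forall k, rpow (INR (S k)) (-eta) - rpow (INR (S (S k))) (-eta) <= eta * zt (1+eta) k).
  { intro k. pose proof (INR_S_pos k) as H1. unfold zt.
    rewrite (S_INR (S k)). set (y := INR (S k)) in *.
    pose proof (bern_neg ((y+1)/y) (-eta) ltac:(apply Rdiv_lt_0_compat; lra) ltac:(lra)).
    unfold Rdiv in H. rewrite rpow_mult in H by (try lra; left; apply Rinv_0_lt_compat; lra).
    rewrite rpow_inv in H by lra.
    pose proof (rpow_gt0 y (-eta) H1).
    assert (rpow y (-eta) * (1 + - eta * ((y + 1) * / y - 1)) <= rpow y (-eta) * (rpow (y + 1) (-eta) * / rpow y (-eta)))
      by (apply Rmult_le_compat_l; lra).
    replace (rpow y (-eta) * (rpow (y + 1) (-eta) * / rpow y (-eta))) with (rpow (y+1) (-eta)) in H2 by (field; lra).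
    replace (/ rpow y (1 + eta)) with (rpow y (-eta) * / y).
    2:{ rewrite <- rpow_opp by lra. replace (- (1 + eta)) with (-eta + -(1)) by ring.
        rewrite rpow_plus by lra. rewrite (rpow_opp y 1), rpow_1 by lra. reflexivity. }
    replace (rpow y (-eta) * (1 + - eta * ((y + 1) * / y - 1))) with (rpow y (-eta) - eta * (rpow y (-eta) * / y)) in H2 by (field; lra).
    lra. }
  induction L.
  - simpl. specialize (Hterm O). replace (INR 1) with 1 in * by reflexivity. rewrite !rpow_one in *. change (INR 2) with (1+1) in *. lra.
  - rewrite tech5. specialize (Hterm (S L)). lra.
Qed.

Lemma zeta_big eta : 0 < eta -> ex_series (zt (1 + eta)) -> / (2 * eta) <= Series (zt (1 + eta)).
Proof.
  intros He Hex.
  destruct (INR_unbounded (rpow 2 (/ eta))) as [L HL].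
  pose proof (zeta_lower_partial eta L He).
  assert (Hbig : rpow (INR (S (S L))) (- eta) <= / 2).
  { rewrite rpow_opp by apply INR_S_pos. apply Rinv_le_contravar. lra.
    replace 2 with (rpow (rpow 2 (/ eta)) eta) at 1.
    2:{ rewrite rpow_rpow by lra. replace (/ eta * eta) with 1 by (field; lra). apply rpow_1; lra. }
    apply rpow_le; [|lra]. split. apply rpow_ge0.
    rewrite !S_INR. lra. }
  pose proof (ser_partial (zt (1+eta)) L (fun n => Rlt_le _ _ (zt_pos _ n)) Hex).
  assert (/2 <= eta * Series (zt (1+eta))) by (apply Rle_trans with (eta * sum_f_R0 (zt (1 + eta)) L); [lra|apply Rmult_le_compat_l; lra]).
  apply Rmult_le_reg_l with (2 * eta). lra. rewrite Rinv_r by lra. lra.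
Qed.


Lemma part3 p s : 1 < p -> p <= s ->
  forall c : R, c < conj_exp p ->
     exists x : nat -> C, in_lorentz p s x /\
       c * lorentz_norm p s x < max_lorentz_norm p s x.
Proof.
  intros Hp Hps c0 Hc0.
  assert (Hs : 1 < s) by lra.
  destruct (Rle_dec c0 0) as [Hneg|Hpos].
  { destruct (xe1_props p s Hp Hps) as [H1 [H2 H3]]. eexists. split. exact H1. rewrite H2, H3.
    pose proof (zeta_ge1 _ (zeta_conv _ (al_gt1 p s Hp Hps))).
    unfold zeta. change (fun m : nat => / rpow (INR (S m)) (s / conj_exp p + 1)) with (zt (s / conj_exp p + 1)).
    pose proof (rpow_gt0 (Series (zt (s / conj_exp p + 1))) (/s) ltac:(lra)). lra. }
  apply Rnot_le_lt in Hpos.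
  set (K := conj_exp p) in *.
  set (g0 := (p-1)/p).
  assert (HgK : g0 * K = 1) by (unfold g0, K, conj_exp; field; lra).
  assert (Hg0 : 0 < g0 < 1).
  { unfold g0; split. apply Rdiv_lt_0_compat; lra. apply Rmult_lt_reg_r with p; [lra|]. unfold Rdiv. rewrite Rmult_assoc, Rinv_l; lra. }
  assert (HK : 0 < K) by (unfold K, conj_exp; apply Rdiv_lt_0_compat; lra).
  set (dl := (1 - c0/K)/2).
  assert (Hdl : 0 < dl < 1).
  { unfold dl. assert (c0 / K < 1) by (apply Rmult_lt_reg_r with K; [lra|]; unfold Rdiv; rewrite Rmult_assoc, Rinv_l; lra).
    assert (0 < c0 / K) by (apply Rdiv_lt_0_compat; lra). lra. }
  assert (Hdk : c0 < (1 - dl) * K).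
  { unfold dl. replace ((1 - (1 - c0 / K) / 2) * K) with ((K + c0)/2) by (field; lra). lra. }
  set (mu := rpow ((1 - dl) * K) s).
  set (cs := rpow c0 s).
  assert (Hcs : 0 < cs) by (apply rpow_gt0; lra).
  assert (Hmu : cs < mu) by (apply rpow_lt; lra).
  destruct (INR_unbounded (rpow (/ dl) (2 / g0))) as [n1 Hn1].
  set (n0 := S n1).
  assert (Hn0pos : 0 < INR n0) by apply INR_S_pos.
  assert (Hn0 : / dl <= rpow (INR n0) (g0 / 2)).
  { replace (/ dl) with (rpow (rpow (/ dl) (2 / g0)) (g0 / 2)).
    2:{ rewrite rpow_rpow by (left; apply Rinv_0_lt_compat; lra). replace (2 / g0 * (g0 / 2)) with 1 by (field; lra).
        apply rpow_1. left; apply Rinv_0_lt_compat; lra. }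
    apply rpow_le; [|lra]. split. apply rpow_ge0. unfold n0. rewrite S_INR. lra. }
  set (eps := Rmin (g0 / 2) ((mu - cs) / (4 * s * mu * INR n0))).
  assert (Heps : 0 < eps).
  { unfold eps. apply Rmin_glb_lt. lra. apply Rdiv_lt_0_compat. lra.
    apply Rmult_lt_0_compat; [|lra]. apply Rmult_lt_0_compat; lra. }
  assert (Heps1 : eps <= g0 / 2) by apply Rmin_l.
  assert (Heps2 : eps <= (mu - cs) / (4 * s * mu * INR n0)) by apply Rmin_r.
  set (eta := s * eps).
  assert (Heta : 0 < eta) by (unfold eta; nra).
  set (g := g0 - eps).
  assert (Hg : g0 / 2 <= g < 1) by (unfold g; lra).
  assert (Hgpos : 0 < g) by lra.
  set (a := fun k => rpow (INR (S k)) (g - 1)).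
  assert (Ha : forall k, 0 <= a k) by (intro; apply rpow_ge0).
  set (x := fun k => RtoC (a k)).
  assert (Hmono : forall i j, (i <= j)%nat -> Cmod (x j) <= Cmod (x i)).
  { intros i j Hij. unfold x. rewrite !Cmod_R, !Rabs_pos_eq by apply Ha. unfold a.
    replace (g - 1) with (- (1 - g)) by ring. rewrite !rpow_opp by apply INR_S_pos.
    apply Rinv_le_contravar. apply rpow_gt0, INR_S_pos. apply rpow_le; [|lra].
    split. apply pos_INR. apply le_INR; lia. }
  assert (Ea : forall k, xstar x (S k) = a k).
  { intro k. unfold xstar. rewrite xstar_bar_mono_seq by auto. simpl. unfold x. rewrite Cmod_R, Rabs_pos_eq by apply Ha. reflexivity. }
  assert (ELT : forall m, lorentz_term p s x m = zt (1 + eta) m).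
  { intro m. unfold lorentz_term. rewrite Ea. unfold a, zt. pose proof (INR_S_pos m).
    rewrite rpow_rpow by lra. rewrite <- rpow_plus by lra.
    replace (s / p - 1 + (g - 1) * s) with (- (1 + eta)) by (unfold eta, g, g0; field; lra).
    apply rpow_opp; lra. }
  pose proof (zeta_conv (1 + eta) ltac:(lra)) as HexZ.
  set (Z := Series (zt (1 + eta))).
  assert (HexL : ex_series (LT p s a)).
  { eapply ex_series_ext; [|exact HexZ]. intro m. rewrite <- ELT. unfold lorentz_term, LT. rewrite Ea. reflexivity. }
  assert (Hin : in_lorentz p s x).
  { split. intros n Hn. destruct n; [lia|]. rewrite xstar_bar_mono_seq by auto. reflexivity.
    eapply ex_series_ext; [|exact HexZ]. intro m. symmetry. apply ELT. }
  exists x. split; [exact Hin|].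
  assert (EL : lorentz_norm p s x = rpow Z (/ s)).
  { unfold lorentz_norm. f_equal. apply Series_ext. apply ELT. }
  assert (EM : max_lorentz_norm p s x = rpow (Series (MT p s a)) (/ s)).
  { unfold max_lorentz_norm. f_equal. apply Series_ext. intro m. unfold max_lorentz_term, MT.
    f_equal. f_equal. f_equal. apply sum_eq. intros; apply Ea. }
  rewrite EL, EM.
  destruct (hardy_series p s a Hp Hps Ha HexL) as [HexM _].
  set (kap := rpow ((1 - dl) / g) s).
  assert (Hpt : forall m, (n0 <= m)%nat -> kap * zt (1 + eta) m <= MT p s a m).
  { intros m Hm. rewrite EMT_gen by auto.
    pose proof (INR_S_pos m) as Hnm.
    set (R := rpow (INR (S m)) g).
    assert (HR : / dl <= R).
    { eapply Rle_trans. exact Hn0. eapply Rle_trans.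
      apply (rpow_le (INR n0) (INR (S m)) (g0/2)). split; [lra|apply le_INR; lia]. lra.
      unfold R. apply rpow_exp_le. rewrite S_INR. pose proof (pos_INR m); lra. lra. }
    assert (HR1 : (1 - dl) * R <= R - 1).
    { assert (1 <= dl * R). { apply Rmult_le_reg_l with (/dl). apply Rinv_0_lt_compat; lra.
        rewrite <- Rmult_assoc, Rinv_l, Rmult_1_l, Rmult_1_r by lra. exact HR. } lra. }
    assert (HS : (1 - dl) / g * R <= sum_f_R0 a m).
    { pose proof (sum_pow_lower g m ltac:(lra)) as Hsl. fold a in Hsl.
      assert (R <= rpow (INR (S (S m))) g) by (apply rpow_le; [split; [lra|apply le_INR; lia]|lra]).
      apply Rmult_le_reg_l with g. lra. replace (g * ((1 - dl) / g * R)) with ((1-dl) * R) by (field; lra). lra. }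
    assert (HR0 : 0 <= R) by apply rpow_ge0.
    assert (Hk : 0 <= (1 - dl) / g * R) by (apply Rmult_le_pos; [apply Rdiv_le_0_compat|]; lra).
    assert (Hpow : rpow ((1 - dl) / g * R) s <= rpow (sum_f_R0 a m) s) by (apply rpow_le; lra).
    rewrite rpow_mult in Hpow by (try lra; apply Rdiv_le_0_compat; lra).
    unfold R in Hpow. rewrite rpow_rpow in Hpow by lra. fold kap in Hpow.
    assert (Ezt : zt (s / conj_exp p + 1) m * rpow (INR (S m)) (g * s) = zt (1 + eta) m).
    { unfold zt. replace (s / conj_exp p + 1) with ((1 + eta) + g * s) by (unfold eta, g, g0, conj_exp; field; lra).
      rewrite rpow_plus by lra. field. split; apply Rgt_not_eq, rpow_gt0; lra. }
    pose proof (zt_pos (s / conj_exp p + 1) m).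
    rewrite <- Ezt.
    replace (kap * (zt (s / conj_exp p + 1) m * rpow (INR (S m)) (g * s))) with
      (zt (s / conj_exp p + 1) m * (kap * rpow (INR (S m)) (g * s))) by ring.
    apply Rmult_le_compat_l; lra. }
  assert (Hkap0 : 0 <= kap) by apply rpow_ge0.
  assert (HMk : kap * (Z - INR n0) <= Series (MT p s a)).
  { assert (Hn0gt : (0 < n0)%nat) by (unfold n0; lia).
    rewrite (Series_incr_n (MT p s a) n0 Hn0gt HexM).
    unfold Z. rewrite (Series_incr_n (zt (1 + eta)) n0 Hn0gt HexZ).
    assert (Hsz : sum_f_R0 (zt (1 + eta)) (Init.Nat.pred n0) <= INR n0).
    { replace (INR n0) with (sum_f_R0 (fun _ => 1) (Init.Nat.pred n0)) by (rewrite sum_cte; unfold n0; simpl Init.Nat.pred; ring).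
      apply sum_Rle. intros k _. unfold zt.
      pose proof (rpow_exp_le (INR (S k)) 0 (1 + eta) ltac:(rewrite S_INR; pose proof (pos_INR k); lra) ltac:(lra)).
      rewrite rpow_exp0 in H by apply INR_S_pos.
      apply Rle_trans with (/ 1). apply Rinv_le_contravar; lra. rewrite Rinv_1; lra. }
    assert (HsM : 0 <= sum_f_R0 (MT p s a) (Init.Nat.pred n0)) by (apply cond_pos_sum; apply MT_ge0).
    assert (Hsh : kap * Series (fun k => zt (1 + eta) (n0 + k)) <= Series (fun k => MT p s a (n0 + k))).
    { rewrite <- Series_scal_l. apply Series_le. intro k. split.
      apply Rmult_le_pos; auto. left; apply zt_pos. apply Hpt. lia.
      apply (ex_series_incr_n (MT p s a) n0). exact HexM. }
    assert (0 <= sum_f_R0 (zt (1 + eta)) (Init.Nat.pred n0)) by (apply cond_pos_sum; intro; left; apply zt_pos).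
    assert (kap * (sum_f_R0 (zt (1 + eta)) (Init.Nat.pred n0) - INR n0) <= 0).
    { replace 0 with (kap * 0) by ring. apply Rmult_le_compat_l; lra. }
    replace (kap * (sum_f_R0 (zt (1 + eta)) (Init.Nat.pred n0) + Series (fun k : nat => zt (1 + eta) (n0 + k)) - INR n0))
      with (kap * Series (fun k : nat => zt (1 + eta) (n0 + k)) + kap * (sum_f_R0 (zt (1 + eta)) (Init.Nat.pred n0) - INR n0)) by ring.
    lra. }
  assert (Hmu0 : 0 < mu) by lra.
  assert (Hkm : mu <= kap).
  { unfold mu, kap. apply rpow_le; [|lra]. split. apply Rmult_le_pos; lra.
    assert (HgK2 : g * K <= 1) by (unfold g; assert (0 < eps * K) by nra; nra).
    apply Rmult_le_reg_l with g. lra. replace (g * ((1 - dl) / g)) with (1 - dl) by (field; lra).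
    replace (g * ((1 - dl) * K)) with ((1 - dl) * (g * K)) by ring.
    assert ((1 - dl) * (g * K) <= (1 - dl) * 1) by (apply Rmult_le_compat_l; lra). lra. }
  pose proof (zeta_big eta Heta HexZ) as HZ. fold Z in HZ.
  assert (HZ2 : 1 <= Z * (2 * eta)).
  { apply Rmult_le_reg_r with (/ (2 * eta)). apply Rinv_0_lt_compat; lra.
    rewrite Rmult_assoc, Rinv_r, Rmult_1_l, Rmult_1_r by lra. exact HZ. }
  assert (Heta2 : 4 * mu * INR n0 * eta <= mu - cs).
  { unfold eta. apply Rle_trans with (4 * mu * INR n0 * s * ((mu - cs) / (4 * s * mu * INR n0))).
    replace (4 * mu * INR n0 * (s * eps)) with (4 * mu * INR n0 * s * eps) by ring.
    apply Rmult_le_compat_l; [|lra]. apply Rmult_le_pos; [|lra]. apply Rmult_le_pos; lra.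
    right; field. repeat split; lra. }
  assert (HZ0 : 0 <= Z) by (pose proof (Rinv_0_lt_compat (2 * eta) ltac:(lra)); lra).
  assert (HZmc : 2 * mu * INR n0 <= Z * (mu - cs)).
  { apply Rle_trans with (Z * (4 * mu * INR n0 * eta)).
    replace (Z * (4 * mu * INR n0 * eta)) with ((Z * (2 * eta)) * (2 * mu * INR n0)) by ring.
    replace (2 * mu * INR n0) with (1 * (2 * mu * INR n0)) at 1 by ring.
    apply Rmult_le_compat_r; [|lra]. apply Rmult_le_pos; lra.
    apply Rmult_le_compat_l; lra. }
  assert (HZn : INR n0 <= Z).
  { assert (Z * (mu - cs) <= Z * mu) by (apply Rmult_le_compat_l; lra).
    apply Rmult_le_reg_l with mu. lra. nra. }
  assert (HM2 : mu * (Z - INR n0) <= Series (MT p s a)).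
  { eapply Rle_trans; [|exact HMk]. apply Rmult_le_compat_r; lra. }
  assert (Hfin : cs * Z < Series (MT p s a)).
  { assert (0 < mu * INR n0) by nra. nra. }
  assert (Ec : c0 = rpow cs (/ s)).
  { unfold cs. rewrite rpow_rpow by lra. replace (s * / s) with 1 by (field; lra). rewrite rpow_1; lra. }
  rewrite Ec. rewrite <- rpow_mult by lra. apply rpow_lt. split; [nra|exact Hfin].
  apply Rinv_0_lt_compat; lra.
Qed.

Theorem corollary3p6 (p s : R) (hp : 1 < p) (hps : p <= s) :
  (forall x : nat -> C, in_lorentz p s x ->
     ex_series (max_lorentz_term p s x) /\
     rpow (zeta (s / conj_exp p + 1)) (/ s) * lorentz_norm p s x
       <= max_lorentz_norm p s x /\
     max_lorentz_norm p s x <= conj_exp p * lorentz_norm p s x) /\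
  (* optimality of the lower constant *)
  (forall c : R, rpow (zeta (s / conj_exp p + 1)) (/ s) < c ->
     exists x : nat -> C, in_lorentz p s x /\
       max_lorentz_norm p s x < c * lorentz_norm p s x) /\
  (* optimality of the upper constant *)
  (forall c : R, c < conj_exp p ->
     exists x : nat -> C, in_lorentz p s x /\
       c * lorentz_norm p s x < max_lorentz_norm p s x).
Proof.
  split; [apply part1; auto|split; [apply part2; auto|apply part3; auto]].
Qed.
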